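(* Let $m,n,k$ be positive integers with $k\le n$, $A\in\mathbb{R}^{m\times n}$ and $y\in\mathbb{R}^m$. Let $F(x)=\frac12\|Ax-y\|_2^2$ for $x\in\mathbb{R}^n$, and let $H:\mathbb{R}^n\to\mathbb{R}^n$ be any map such that for every $\mathcal{X}\in\mathbb{R}^n$, $$H(\mathcal{X})\in\arg\min\left\{\tfrac12\|Ax-y\|_2^2 : x\in\mathbb{R}^n,\ \mathrm{supp}(x)\subseteq\mathrm{largest}_k(\mathcal{X})\right\}.$$ Then: (1) for any $\mathcal{X}^*\in\arg\min_{\mathcal{X}\in\mathbb{R}^n}F(H(\mathcal{X}))$, the vector $H(\mathcal{X}^* )$ is a solution of $\min_{x\in\mathbb{R}^n}F(x)$ subject to $\|x\|_0\le k$; (2) for any minimizer $x'$ of $\min_{x\in\mathbb{R}^n}F(x)$ subject to $\|x\|_0\le k$, we have $x'\in\arg\min_{\mathcal{X}\in\mathbb{R}^n}F(H(\mathcal{X}))$.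
   Context: $\mathrm{supp}(x)=\{i:x_i\neq0\}$ and $\|x\|_0=|\mathrm{supp}(x)|$. For $v\in\mathbb{R}^n$, $\mathrm{largest}_k(v)$ is the set of indices of the $k$ entries of $v$ with largest absolute value (ties broken by selecting the highest indices). *)

(* Defs.v *)
From mathcomp Require Import all_boot all_order all_algebra.
From mathcomp Require Import reals.
Set Implicit Arguments. Unset Strict Implicit. Unset Printing Implicit Defensive.
Import Order.TTheory GRing.Theory Num.Theory.
Local Open Scope ring_scope.

Definition supp (R : realType) (n : nat) (x : 'cV[R]_n) : {set 'I_n} :=
  [set i | x i 0 != 0].

Definition l0norm (R : realType) (n : nat) (x : 'cV[R]_n) : nat := #|supp x|.

(* j "beats" i when |v_j| > |v_i|, or |v_j| = |v_i| and j has the higher index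
   (ties broken in favour of highest indices). *)
Definition beats (R : realType) (n : nat) (v : 'cV[R]_n) (j i : 'I_n) : bool :=
  (`|v i 0| < `|v j 0|) || ((`|v j 0| == `|v i 0|) && (i < j)%N).

(* largest_k(v): the k indices ranked highest in the strict total order above,
   i.e. those beaten by fewer than k indices. *)
Definition largest (R : realType) (n : nat) (k : nat) (v : 'cV[R]_n) : {set 'I_n} :=
  [set i | (#|[set j | beats v j i]| < k)%N].

Definition lsq (R : realType) (m n : nat) (A : 'M[R]_(m, n)) (y : 'cV[R]_m)
  (x : 'cV[R]_n) : R :=
  2^-1 * \sum_(i < m) ((A *m x - y) i 0) ^+ 2.

(* Main.v *)
Require Import Defs.
From mathcomp Require Import all_boot all_order all_algebra.
From mathcomp Require Import reals.
From mathcomp Require Import zify.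
Import Order.TTheory GRing.Theory Num.Theory.
Local Open Scope ring_scope.

Section Aux.
Variables (R : realType) (n : nat) (v : 'cV[R]_n).

Lemma beats_irr i : beats v i i = false.
Proof. by rewrite /beats ltxx ltnn andbF. Qed.

Lemma beats_trans i j l : beats v j i -> beats v l j -> beats v l i.
Proof.
rewrite /beats => /orP[h1|/andP[/eqP e1 h1]] /orP[h2|/andP[/eqP e2 h2]].
- by rewrite (lt_trans h1 h2).
- by rewrite e2 h1.
- by rewrite -e1 h2.
- apply/orP; right; rewrite e2 e1 eqxx /=; lia.
Qed.

Lemma beats_total i j : i != j -> beats v i j || beats v j i.
Proof.
move=> nij; rewrite /beats.
case: (ltgtP `|v i 0| `|v j 0|) => h //=; rewrite ?orbT //.
idtac.
have : (nat_of_ord i != nat_of_ord j) by [].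
lia.
Qed.

Definition rk i := #|[set j | beats v j i]|.

Lemma rk_lt i j : beats v j i -> (rk j < rk i)%N.
Proof.
move=> hji; apply: proper_card; apply/properP; split.
  apply/subsetP => l; rewrite !inE => hl; exact: beats_trans _ _ _ hji hl.
by exists j; rewrite !inE ?beats_irr.
Qed.

Lemma rk_inj : injective rk.
Proof.
move=> i j e; apply/eqP; apply/negPn/negP => nij.
case/orP: (beats_total _ _ nij) => /rk_lt; rewrite e ltnn //.
Qed.

Lemma card_largest k : (#|largest k v| <= k)%N.
Proof.
rewrite cardE -(size_map rk) -(size_iota 0 k).
apply: uniq_leq_size; first by rewrite map_inj_uniq ?enum_uniq //; exact: rk_inj.
move=> x /mapP[i]; rewrite mem_enum inE => hi ->.
rewrite mem_iota add0n leq0n /=; by rewrite size_iota in hi.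
Qed.
End Aux.

Lemma supp_largest (R : realType) (n k : nat) (x : 'cV[R]_n) :
  (l0norm x <= k)%N -> supp x \subset largest k x.
Proof.
rewrite /l0norm => hk; apply/subsetP => i hi; rewrite inE.
have hs : [set j | beats x j i] \subset supp x :\ i.
  apply/subsetP => j; rewrite !inE => hb.
  have -> : j != i by apply/eqP => e; rewrite e (@beats_irr R n x) in hb.
  move: hi; rewrite inE -!normr_gt0 /= => hi.
  move: hb; rewrite /beats => /orP[h|/andP[/eqP h _]].
    exact: lt_trans hi h.
  by rewrite h.
have := subset_leq_card hs.
have := cardsD1 i (supp x); rewrite hi /=.
move=> e1 e2; apply: leq_trans _ hk; by rewrite e1 add1n ltnS.
Qed.

Theorem propositionA1 (R : realType) (m n k : nat)
  (A : 'M[R]_(m, n)) (y : 'cV[R]_m) (H : 'cV[R]_n -> 'cV[R]_n) :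
  (0 < m)%N -> (0 < n)%N -> (0 < k)%N -> (k <= n)%N ->
  (forall X : 'cV[R]_n,
      supp (H X) \subset largest k X /\
      (forall x : 'cV[R]_n, supp x \subset largest k X ->
         lsq A y (H X) <= lsq A y x)) ->
  (forall Xs : 'cV[R]_n,
      (forall X : 'cV[R]_n, lsq A y (H Xs) <= lsq A y (H X)) ->
      (l0norm (H Xs) <= k)%N /\
      (forall x : 'cV[R]_n, (l0norm x <= k)%N -> lsq A y (H Xs) <= lsq A y x))
  /\
  (forall x' : 'cV[R]_n,
      (l0norm x' <= k)%N ->
      (forall x : 'cV[R]_n, (l0norm x <= k)%N -> lsq A y x' <= lsq A y x) ->
      (forall X : 'cV[R]_n, lsq A y (H x') <= lsq A y (H X))).
Proof.
move=> _ _ _ _ hH.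
have l0H X : (l0norm (H X) <= k)%N.
  apply: leq_trans (@card_largest _ _ X k).
  exact: subset_leq_card (hH X).1.
split.
  move=> Xs hXs; split; first exact: l0H.
  move=> x hx; apply: le_trans (hXs x) _.
  exact: (hH x).2 _ (@supp_largest _ _ _ _ hx).
move=> x' hx' hopt X.
apply: le_trans (hopt _ (l0H X)).
exact: (hH x').2 _ (@supp_largest _ _ _ _ hx').
Qed.
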